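(* Let $\mathbb{F}$ be a field and let $n>4$ be an integer. Then for each $p\in\{2,\ldots,n-3\}$ and each non-negative integer $q\le p$ there exists a unital $\mathbb{F}$-algebra $\mathcal{A}$ with $\dim\mathcal{A}=n$ and $l(\mathcal{A})=2^{p}+2^{q}$.
   Context: All algebras are finite-dimensional, unital, not necessarily associative algebras over the field $\mathbb{F}$. For a finite generating set $S$ of an algebra $\mathcal{A}$, a word in $S$ is any product (with any bracketing) of finitely many elements of $S$; its length is the number of factors, and $1$ is a word of length $0$. $L_i(S)$ is the linear span of all words in $S$ of length at most $i$. The length of $S$ is $l(S)=\min\{k\ge0: L_k(S)=\mathcal{A}\}$, and $l(\mathcal{A})=\max\{l(S): S\text{ a finite generating set of }\mathcal{A}\}$. *)

(* Defs.v *)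
From HB Require Import structures.
From mathcomp Require Import all_boot all_order all_algebra.
Set Implicit Arguments. Unset Strict Implicit. Unset Printing Implicit Defensive.
Import GRing.Theory.
Local Open Scope ring_scope.

(* A (not necessarily associative) n-dimensional F-algebra is modelled on the
   coordinate space 'rV[F]_n with a multiplication map [mul] and an element [one]. *)
Section NAAlg.
Variables (F : fieldType) (n : nat).
Local Notation V := 'rV[F]_n.

Definition bilinear_mul (mul : V -> V -> V) : Prop :=
  (forall (a : F) (x y z : V), mul (a *: x + y) z = a *: mul x z + mul y z) /\
  (forall (a : F) (x y z : V), mul z (a *: x + y) = a *: mul z x + mul z y).

Definition is_unit_elt (mul : V -> V -> V) (one : V) : Prop :=
  forall x : V, mul one x = x /\ mul x one = x.

Inductive is_word (mul : V -> V -> V) (one : V) (S : seq V) : nat -> V -> Prop :=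
  | word_one : is_word mul one S 0 one
  | word_gen (s : V) : s \in S -> is_word mul one S 1 s
  | word_mul (k1 k2 : nat) (x y : V) :
      (0 < k1)%N -> (0 < k2)%N ->
      is_word mul one S k1 x -> is_word mul one S k2 y ->
      is_word mul one S (k1 + k2) (mul x y).

Definition in_L (mul : V -> V -> V) (one : V) (S : seq V) (i : nat) (v : V) : Prop :=
  exists ws : seq V,
    (forall w, w \in ws -> exists k, (k <= i)%N /\ is_word mul one S k w) /\
    v \in <<ws>>%VS.

Definition L_full mul one S i : Prop := forall v : V, in_L mul one S i v.

Definition generating mul one S : Prop := exists i, L_full mul one S i.

Definition set_length mul one S (m : nat) : Prop :=
  L_full mul one S m /\ forall k, (k < m)%N -> ~ L_full mul one S k.

Definition alg_length mul one (m : nat) : Prop :=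
  (exists S : seq V, generating mul one S /\ set_length mul one S m) /\
  (forall (S : seq V) (m' : nat), generating mul one S ->
      set_length mul one S m' -> (m' <= m)%N).
End NAAlg.

(* Main.v *)
Require Import Defs.
From HB Require Import structures.
From mathcomp Require Import all_boot all_order all_algebra.
From mathcomp Require Import ring zify.
Set Implicit Arguments. Unset Strict Implicit. Unset Printing Implicit Defensive.
Import GRing.Theory.
Local Open Scope ring_scope.

Section General.
Variables (F : fieldType) (n : nat).
Local Notation V := 'rV[F]_n.

Lemma span_ind (P : V -> Prop) (ws : seq V) :
  P 0 -> (forall a x y, P x -> P y -> P (a *: x + y)) ->
  (forall w, w \in ws -> P w) -> forall v, v \in <<ws>>%VS -> P v.
Proof.
move=> P0 Pl Pw v hv; rewrite (@coord_span _ _ _ (in_tuple ws) v hv).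
apply: (big_ind P) => //.
  by move=> x y Px Py; rewrite -[x]scale1r; apply: Pl.
move=> i _; rewrite -[_ *: _]addr0; apply: Pl => //; apply: Pw; apply: mem_nth; exact: ltn_ord.
Qed.

Variables (mul : V -> V -> V) (one : V).

Lemma in_L0 S i : in_L mul one S i 0.
Proof. by exists [::]; split => //; exact: mem0v. Qed.

Lemma in_L_lin S i a x y : in_L mul one S i x -> in_L mul one S i y ->
  in_L mul one S i (a *: x + y).
Proof.
move=> [ws1 [H1 x1]] [ws2 [H2 y2]]; exists (ws1 ++ ws2); split.
  by move=> w; rewrite mem_cat => /orP [] ?; [apply: H1|apply: H2].
by rewrite span_cat; apply: memv_add => //; apply: memvZ.
Qed.

Lemma in_L_mono S i j v : in_L mul one S i v -> (i <= j)%N -> in_L mul one S j v.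
Proof.
move=> [ws [H1 h]] hij; exists ws; split => // w /H1 [k [hk wk]].
by exists k; split => //; apply: leq_trans hk hij.
Qed.

Lemma in_L_word S i k w : is_word mul one S k w -> (k <= i)%N -> in_L mul one S i w.
Proof.
move=> wk hk; exists [:: w]; split; last by apply: memv_span; exact: mem_head.
by move=> w'; rewrite inE => /eqP ->; exists k.
Qed.

Lemma in_L_gen S i u : (1 <= i)%N -> u \in <<S>>%VS -> in_L mul one S i u.
Proof.
move=> hi hu; exists S; split => // w hw; exists 1%N; split => //.
exact: word_gen.
Qed.

Hypothesis (Hb : bilinear_mul mul) (Hu : is_unit_elt mul one).

Lemma amul0l z : mul 0 z = 0.
Proof.
have := Hb.1 1 0 0 z; rewrite !scale1r addr0.
move/(congr1 (fun t => t - mul 0 z)); rewrite subrr addrK => <-//.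
Qed.

Lemma amul0r z : mul z 0 = 0.
Proof.
have := Hb.2 1 0 0 z; rewrite !scale1r addr0.
move/(congr1 (fun t => t - mul z 0)); rewrite subrr addrK => <-//.
Qed.

Lemma word0 S k w : is_word mul one S k w -> k = 0%N -> w = one.
Proof. by case=> //= k1 k2 x y h1 h2 _ _; lia. Qed.

Lemma in_L_mul S a b u v : in_L mul one S a u -> in_L mul one S b v ->
  in_L mul one S (a + b) (mul u v).
Proof.
move=> [ws1 [H1 u1]] [ws2 [H2 v2]].
pose P x := in_L mul one S (a+b) (mul x v).
apply: (@span_ind P _ _ _ _ _ u1).
- by rewrite /P amul0l; exact: in_L0.
- by move=> c x y Px Py; rewrite /P (Hb.1); exact: in_L_lin.
move=> w /H1 [k [hk wk]].
pose Q y := in_L mul one S (a+b) (mul w y).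
apply: (@span_ind Q _ _ _ _ _ v2).
- by rewrite /Q amul0r; exact: in_L0.
- by move=> c x y Px Py; rewrite /Q (Hb.2); exact: in_L_lin.
move=> w' /H2 [k' [hk' wk']].
rewrite /Q.
case: (posnP k) => [k0|kpos].
  rewrite (word0 wk k0) (Hu w').1; apply: in_L_word wk' _; lia.
case: (posnP k') => [k0|kpos'].
  rewrite (word0 wk' k0) (Hu w).2; apply: in_L_word wk _; lia.
apply: in_L_word (word_mul kpos kpos' wk wk') _; lia.
Qed.
End General.

Section Concrete.
Variables (F : fieldType) (m p q : nat).
Hypothesis (hpn : (p.+3 <= m.+1)%N) (hqp : (q <= p)%N).
Local Notation n := m.+1.
Local Notation V := 'rV[F]_n.
Local Notation K := (2 ^ p + 2 ^ q)%N.

Definition c (x : V) (k : nat) : F := x 0 (inord k).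
Definition rw (f : nat -> F) : V := \row_(j < n) f j.
Lemma crw f k : (k < n)%N -> c (rw f) k = f k.
Proof. by move=> hk; rewrite /c /rw mxE inordK. Qed.
Lemma cD x y k : c (x + y) k = c x k + c y k. Proof. by rewrite /c !mxE. Qed.
Lemma cZ a x k : c (a *: x) k = a * c x k. Proof. by rewrite /c !mxE. Qed.
Lemma cN x k : c (- x) k = - c x k. Proof. by rewrite /c !mxE. Qed.
Lemma c0 k : c 0 k = 0. Proof. by rewrite /c !mxE. Qed.
Lemma c_inj x y : (forall k, (k < n)%N -> c x k = c y k) -> x = y.
Proof. by move=> H; apply/rowP => j; have := H j (ltn_ord j); rewrite /c inord_val. Qed.

Definition ev k : V := rw (fun j => if j == k then 1 else 0).
Definition one : V := ev 0.
Definition B (x y : V) : V := rw (fun k =>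
  if (2 <= k <= p.+1)%N then c x k.-1 * c y k.-1
  else if k == p.+2 then c x p.+1 * c y q.+1 else 0).
Definition mul (x y : V) : V :=
  c x 0 *: y + c y 0 *: x - (c x 0 * c y 0) *: one + B x y.

Lemma mul_bil : bilinear_mul mul.
Proof.
split=> a x y z; apply: c_inj => k hk; rewrite /mul /B.
  rewrite !(cD, cZ, cN) !crw //; rewrite !(cD, cZ, cN).
  by repeat case: ifP => _; ring.
rewrite !(cD, cZ, cN) !crw //; rewrite !(cD, cZ, cN).
by repeat case: ifP => _; ring.
Qed.

Lemma cone k : (k < n)%N -> c one k = if k == 0 then 1 else 0.
Proof. by move=> hk; rewrite crw. Qed.

Lemma Bone1 x : B one x = 0.
Proof.
apply: c_inj => k hk; rewrite crw // c0.
case: ifP => [/andP [h1 h2]|_].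
  rewrite cone; last by lia.
  have hk1 : k.-1 != 0 by lia.
  by rewrite (negbTE hk1) /= mul0r.
by case: eqP => // _; rewrite cone; [ rewrite mul0r | lia].
Qed.

Lemma Bone2 x : B x one = 0.
Proof.
apply: c_inj => k hk; rewrite crw // c0.
case: ifP => [/andP [h1 h2]|_].
  rewrite cone; last by lia.
  have hk1 : k.-1 != 0 by lia.
  by rewrite (negbTE hk1) /= mulr0.
by case: eqP => // _; rewrite cone; [ rewrite mulr0 | lia].
Qed.

Lemma mul_unit : is_unit_elt mul one.
Proof.
move=> x; rewrite /mul Bone1 Bone2.
by split; apply: c_inj => k hk; rewrite !(cD, cZ, cN) c0 !cone //=; case: eqP => [->|_]; ring.
Qed.


Definition deg (k : nat) : nat :=
  (if k == 0 then 0 else if k <= p.+1 then 2 ^ k.-1 else if k == p.+2 then K else 1)%N.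
Definition homog (d : nat) (x : V) := forall k, (k < n)%N -> deg k != d -> c x k = 0.
Definition S0 : seq V := [seq ev k | k <- 1%N :: iota p.+3 (n - p.+3)].

Lemma deg1 : deg 1 = 1%N. Proof. by rewrite /deg /=. Qed.
Lemma degbig k : (p.+2 < k)%N -> deg k = 1%N.
Proof.
move=> h; rewrite /deg; case: eqP => [?|_]; first lia.
case: ifP => [?|_]; first lia. case: eqP => [?|_] //; lia.
Qed.
Lemma degp2 : deg p.+2 = K.
Proof. rewrite /deg /= eqxx; case: ifP => //; lia. Qed.
Lemma degmid k : (0 < k)%N -> (k <= p.+1)%N -> deg k = (2 ^ k.-1)%N.
Proof. by move=> h1 h2; rewrite /deg h2; case: eqP => //; lia. Qed.

Lemma homog_word k w : is_word mul one S0 k w -> homog k w.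
Proof.
elim=> {k w}.
- move=> j hj; rewrite cone //; case: (eqVneq j 0) => [->|_ _] //.
- move=> s /mapP [k hk ->] j hj; rewrite crw //; case: (eqVneq j k) => [->|_ _] //.
  move: hk; rewrite inE mem_iota => /orP [/eqP ->|/andP [h1 h2]].
    by rewrite deg1.
  by rewrite degbig //; lia.
- move=> k1 k2 x y h1 h2 _ Hx _ Hy j hj hd.
  have x0 : c x 0 = 0 by apply: Hx => //; rewrite /deg /=; lia.
  have y0 : c y 0 = 0 by apply: Hy => //; rewrite /deg /=; lia.
  rewrite /mul !(cD, cZ, cN) x0 y0 !mul0r !oppr0 !add0r crw //.
  case: ifP => [/andP [j1 j2]|_].
    have dj : deg j = (deg j.-1 + deg j.-1)%N.
      rewrite !degmid; try lia.
      by case: j {hj hd j1 j2} => [|[|j]] //= in j1 *; rewrite expnS mul2n addnn.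
    case: (eqVneq (deg j.-1) k1) => [e1|e1]; last by rewrite Hx ?mul0r //; lia.
    case: (eqVneq (deg j.-1) k2) => [e2|e2]; last by rewrite Hy ?mulr0 //; lia.
    exfalso; lia.
  case: eqP => [ej|//]; subst j.
  case: (eqVneq (deg p.+1) k1) => [e1|e1]; last by rewrite Hx ?mul0r //; lia.
  case: (eqVneq (deg q.+1) k2) => [e2|e2]; last by rewrite Hy ?mulr0 //; lia.
  by move: hd; rewrite degp2 -e1 -e2 !degmid //=; lia.
Qed.

Lemma not_full k : (k < K)%N -> ~ L_full mul one S0 k.
Proof.
move=> hk /(_ (ev p.+2)) [ws [Hws hv]].
have : c (ev p.+2) p.+2 = 0.
  apply: (@span_ind _ _ (fun v => c v p.+2 = 0) ws _ _ _ _ hv).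
  - exact: c0.
  - by move=> a x y Px Py; rewrite cD cZ Px Py mulr0 addr0.
  move=> w /Hws [k' [hk' wk]]; apply: (homog_word wk); first lia.
  by rewrite degp2; apply/eqP; lia.
by rewrite crw ?eqxx //; move/eqP; rewrite oner_eq0.
Qed.


Definition Tp (t : V) := forall k, (k < n)%N -> (k < 2)%N || (p.+2 < k)%N -> c t k = 0.
Definition Up (S : seq V) (v : V) :=
  exists a u, u \in <<S>>%VS /\ Tp (v - a *: one - u).

Lemma Tp_lin b x y : Tp x -> Tp y -> Tp (b *: x + y).
Proof. by move=> hx hy k hk hk2; rewrite cD cZ hx // hy // mulr0 addr0. Qed.

Lemma Up_lin S b x y : Up S x -> Up S y -> Up S (b *: x + y).
Proof.
move=> [a1 [u1 [hu1 ht1]]] [a2 [u2 [hu2 ht2]]].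
exists (b * a1 + a2), (b *: u1 + u2); split; first by rewrite memvD // memvZ.
have -> : b *: x + y - (b * a1 + a2) *: one - (b *: u1 + u2) =
  b *: (x - a1 *: one - u1) + (y - a2 *: one - u2).
  by apply: c_inj => k hk; rewrite !(cD, cZ, cN); ring.
exact: Tp_lin.
Qed.

Lemma Up0 S : Up S 0.
Proof.
exists 0, 0; split; first exact: mem0v.
by move=> k hk _; rewrite !(cD, cZ, cN) c0; ring.
Qed.

Lemma Up_one S : Up S one.
Proof.
exists 1, 0; split; first exact: mem0v.
by move=> k hk _; rewrite !(cD, cZ, cN) c0; ring.
Qed.

Lemma Up_S S s : s \in S -> Up S s.
Proof.
move=> hs; exists 0, s; split; first exact: memv_span.
by move=> k hk _; rewrite !(cD, cZ, cN); ring.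
Qed.

Lemma Up_T S t : Tp t -> Up S t.
Proof.
move=> ht; exists 0, 0; split; first exact: mem0v.
by move=> k hk hk2; rewrite !(cD, cZ, cN) c0 ht //; ring.
Qed.

Lemma Tp_B x y : Tp (B x y).
Proof.
move=> k hk hk2; rewrite crw //.
case: ifP => [?|_]; first lia.
by case: eqP => // ?; lia.
Qed.

Lemma Up_mul S x y : Up S x -> Up S y -> Up S (mul x y).
Proof.
move=> hx hy.
have -> : mul x y = c x 0 *: y + (c y 0 *: x + (- (c x 0 * c y 0) *: one + (1 *: B x y + 0))).
  by apply: c_inj => k hk; rewrite /mul !(cD, cZ, cN) c0; ring.
apply: Up_lin => //; apply: Up_lin => //; apply: Up_lin; first exact: Up_one.
by apply: Up_lin; [apply: Up_T; exact: Tp_B | exact: Up0].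
Qed.

Lemma Up_word S k w : is_word mul one S k w -> Up S w.
Proof.
elim=> {k w}; first exact: Up_one.
  by move=> s hs; exact: Up_S.
by move=> k1 k2 x y _ _ _ hx _ hy; exact: Up_mul.
Qed.

Lemma gen_Up S : generating mul one S -> forall v, Up S v.
Proof.
move=> [i Hi] v; have [ws [Hws hv]] := Hi v.
apply: (@span_ind _ _ (Up S) ws _ _ _ _ hv).
- exact: Up0.
- by move=> a x y; exact: Up_lin.
by move=> w /Hws [k [_ wk]]; exact: Up_word wk.
Qed.

Lemma ev_delta (j : 'I_n) : 'e_j = ev j.
Proof.
apply: c_inj => k hk; rewrite crw // /c mxE eqxx /=.
have -> : (inord k == j) = (k == j :> nat).
  apply/eqP/eqP => [<-|->]; [by rewrite inordK | by rewrite inord_val].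
by case: (k == j).
Qed.

Lemma S0_Up v : Up S0 v.
Proof.
rewrite (row_sum_delta v); apply: (big_ind (Up S0)); first exact: Up0.
  by move=> x y hx hy; rewrite -[x]scale1r; apply: Up_lin.
move=> j _; rewrite -[_ *: _]addr0; apply: Up_lin; last exact: Up0.
rewrite ev_delta.
case: (eqVneq (j : nat) 0) => [->|j0]; first exact: Up_one.
case: (boolP ((j == 1 :> nat) || (p.+2 < j)%N)) => hj.
  apply: Up_S; apply: map_f; rewrite inE mem_iota.
  case/orP: hj => [->//|h]; apply/orP; right; apply/andP; split; first by [].
  have := ltn_ord j; lia.
apply: Up_T => k hk hk2; rewrite crw //; case: eqP => // e.
move: hj hk2; rewrite -e; lia.
Qed.


Definition shape (i : nat) (x : V) :=
  (forall k, (k < n)%N -> (k < i)%N || (p.+2 < k)%N -> c x k = 0) /\ c x i = 1.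

Lemma sq_shape i x : (0 < i)%N -> (i <= p)%N -> shape i x -> shape i.+1 (mul x x).
Proof.
move=> i0 ip [hz h1].
have x0 : c x 0 = 0 by apply: hz => //; lia.
have -> : mul x x = B x x.
  by apply: c_inj => k hk; rewrite /mul !(cD, cZ, cN) x0; ring.
split.
  move=> k hk hk2; rewrite crw //.
  case: ifP => [/andP [k1 k2]|_].
    have -> : c x k.-1 = 0 by apply: hz; lia.
    by rewrite mul0r.
  case: eqP => [e|//]; exfalso; lia.
rewrite crw; last lia.
rewrite ifT; last lia.
by rewrite /= h1 mulr1.
Qed.

Fixpoint itsq (x : V) j := if j is j'.+1 then mul (itsq x j') (itsq x j') else x.

Lemma itsq_ok S x : shape 1 x -> in_L mul one S 1 x ->
  forall j, (j <= p)%N -> shape j.+1 (itsq x j) /\ in_L mul one S (2 ^ j) (itsq x j).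
Proof.
move=> sh il; elim => [|j IH] hj /=; first by split.
have [sh' il'] := IH (ltnW hj); split; first by apply: sq_shape.
rewrite expnS mul2n -addnn; exact: (in_L_mul mul_bil mul_unit il' il').
Qed.

Lemma top x y : shape p.+1 x -> shape q.+1 y -> mul x y = ev p.+2.
Proof.
move=> [hx hx1] [hy hy1].
have x0 : c x 0 = 0 by apply: hx => //; lia.
have y0 : c y 0 = 0 by apply: hy => //; lia.
apply: c_inj => k hk; rewrite /mul !(cD, cZ, cN) x0 y0 !crw //.
case: (eqVneq k p.+2) => [->|ne].
  rewrite (_ : (p.+2 <= p.+1)%N = false) ?andbF; last by rewrite ltnn.
  by rewrite hx1 hy1; ring.
case: (boolP ((1 < k <= p.+1)%N)) => [/andP [k1 k2]|_] /=; last ring.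
have -> : c x k.-1 = 0 by apply: hx; lia.
ring.
Qed.

Lemma desc S x
  (hX : forall j, (j <= p)%N -> shape j.+1 (itsq x j) /\ in_L mul one S (2 ^ j) (itsq x j))
  (hf : in_L mul one S K (ev p.+2)) :
  forall d, (d <= p.+1)%N -> forall v,
    (forall k, (k < n)%N -> (k < p.+2 - d)%N || (p.+2 < k)%N -> c v k = 0) ->
    in_L mul one S K v.
Proof.
elim => [|d IH] hd v hv.
  have -> : v = c v p.+2 *: ev p.+2 + 0.
    apply: c_inj => k hk; rewrite !(cD, cZ) c0 crw //.
    case: (eqVneq k p.+2) => [->|ne]; first ring.
    have -> : c v k = 0 by apply: hv => //; lia.
    ring.
  by apply: in_L_lin => //; exact: in_L0.
have [[sh sh1] il] := hX (p - d)%N (leq_subr _ _).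
set xi := itsq x (p - d)%N in sh sh1 il.
have -> : v = c v (p - d)%N.+1 *: xi + (v - c v (p - d)%N.+1 *: xi).
  by apply: c_inj => k hk; rewrite !(cD, cZ, cN); ring.
apply: in_L_lin.
  apply: in_L_mono il _.
  apply: leq_trans (leq_addr _ _); apply: leq_pexp2l => //; exact: leq_subr.
apply: IH; first lia.
move=> k hk hk2; rewrite !(cD, cZ, cN).
case: (eqVneq k (p - d)%N.+1) => [->|ne]; first by rewrite sh1; ring.
have -> : c v k = 0 by apply: hv => //; lia.
have -> : c xi k = 0 by apply: sh => //; lia.
ring.
Qed.

Lemma upper S : (forall v, Up S v) -> L_full mul one S K.
Proof.
move=> HU.
have Kpos : (0 < K)%N by rewrite addn_gt0 expn_gt0.
have [a [u [hu ht]]] := HU (ev 1).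
set x1 := a *: one + u.
have il1 : in_L mul one S 1 x1.
  apply: in_L_lin; last exact: in_L_gen.
  by apply: (@in_L_word _ _ _ _ _ _ 0%N) => //; exact: word_one.
have cx1 : forall k, (k < n)%N -> (k < 2)%N || (p.+2 < k)%N -> c x1 k = c (ev 1) k.
  move=> k hk hk2.
  have -> : c x1 k = c (ev 1) k - c (ev 1 - a *: one - u) k.
    by rewrite /x1 !(cD, cZ, cN); ring.
  by rewrite ht // subr0.
have sh1 : shape 1 x1.
  split.
    move=> k hk hk2; have hk3 : (k < 2)%N || (p.+2 < k)%N by lia.
    rewrite cx1 // crw //; case: (eqVneq k 1) => // e; exfalso; lia.
  rewrite cx1 ?crw //; lia.
have hX := itsq_ok sh1 il1.
have hf : in_L mul one S K (ev p.+2).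
  rewrite -(top (hX p (leqnn _)).1 (hX q hqp).1).
  exact: (in_L_mul mul_bil mul_unit (hX p (leqnn _)).2 (hX q hqp).2).
have hT := desc hX hf (leqnn p.+1).
move=> v; have [a' [u' [hu' ht']]] := HU v.
have -> : v = a' *: one + (1 *: u' + (v - a' *: one - u')).
  by apply: c_inj => k hk; rewrite !(cD, cZ, cN); ring.
apply: in_L_lin.
  by apply: (@in_L_word _ _ _ _ _ _ 0%N) => //; exact: word_one.
apply: in_L_lin; first exact: in_L_gen.
apply: hT => k hk hk2; apply: ht' => //; lia.
Qed.

Lemma main_sec : exists (mul : V -> V -> V) (one : V),
  bilinear_mul mul /\ is_unit_elt mul one /\ alg_length mul one K.
Proof.
exists mul, one; split; first exact: mul_bil.
split; first exact: mul_unit.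
have fullS0 := upper S0_Up.
split.
  exists S0; split; first by exists K.
  split => //; exact: not_full.
move=> S m' gen [_ Hm]; rewrite leqNgt; apply/negP => hlt.
exact: (Hm _ hlt (upper (gen_Up gen))).
Qed.

End Concrete.

Theorem proposition4p4 (F : fieldType) (n : nat) (hn : (4 < n)%N)
  (p q : nat) (hp2 : (2 <= p)%N) (hpn : (p <= n - 3)%N) (hqp : (q <= p)%N) :
  exists (mul : 'rV[F]_n -> 'rV[F]_n -> 'rV[F]_n) (one : 'rV[F]_n),
    bilinear_mul mul /\ is_unit_elt mul one /\
    alg_length mul one (2 ^ p + 2 ^ q)%N.
Proof.
case: n hn hpn => [//|m] hn hpn.
have hp3 : (p.+3 <= m.+1)%N by lia.
exact: (@main_sec F m p q hp3 hqp).
Qed.
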